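(* Let $q\ge3$ be an integer and $f(x)=\log\left|\frac{\sin\pi qx}{\sin\pi x}\right|$. For all $t\in\left(\frac{3}{8q},\frac{5}{8q}\right)$ and all $0<s\le q^{-1}-t$, $$H(t,s):=A(s)+B(t,s)<0,$$ where $A(s)=\log\frac{\sin\pi s}{\sin\pi(q^{-1}+s)}$ and $B(t,s)=f(0)-f(t)-f'(t)\frac{q^{-1}-t-s}{q-1}$.
   Context: $f(0)=\log q$ (value of $f$ at $0$ by continuity). *)

(* Defs.v *)
From Stdlib Require Import Reals.
From Coquelicot Require Import Coquelicot.
Open Scope R_scope.

Definition fq (q : nat) (x : R) : R :=
  ln (Rabs (sin (PI * INR q * x) / sin (PI * x))).

(* f(0) := log q (value by continuity) *)
Definition fq0 (q : nat) : R := ln (INR q).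

Definition Aq (q : nat) (s : R) : R :=
  ln (sin (PI * s) / sin (PI * (/ INR q + s))).

Definition Bq (q : nat) (t s : R) : R :=
  fq0 q - fq q t - Derive (fq q) t * ((/ INR q - t - s) / (INR q - 1)).

Definition Hq (q : nat) (t s : R) : R := Aq q s + Bq q t s.

(* Main.v *)
Require Import Defs.
From Stdlib Require Import Reals Lra Psatz Machin.
From Coquelicot Require Import Coquelicot.
Open Scope R_scope.
Lemma sin_bounds y : 0 <= y -> y <= PI -> y - y^3/6 <= sin y <= y - y^3/6 + y^5/120.
Proof.
intros H1 H2. destruct (sin_bound y 0 H1 H2) as [A B].
unfold sin_approx, sin_term in A, B. cbn [sum_f_R0] in A, B.
simpl in A, B. lra.
Qed.
Lemma cos_bounds y : -PI/2 <= y -> y <= PI/2 -> 1 - y^2/2 <= cos y <= 1 - y^2/2 + y^4/24.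
Proof.
intros H1 H2. destruct (cos_bound y 0 H1 H2) as [A B].
unfold cos_approx, cos_term in A, B. cbn [sum_f_R0] in A, B.
simpl in A, B. lra.
Qed.
Lemma der (q : R) t : 0 < sin (PI * q * t) -> 0 < sin (PI * t) ->
  is_derive (fun y => ln (Rabs (sin (PI * q * y) / sin (PI * y)))) t
   (PI * q * cos (PI * q * t) / sin (PI * q * t) - PI * cos (PI * t) / sin (PI * t)).
Proof.
intros H1 H2.
assert (Hp : 0 < sin (PI * q * t) * / sin (PI * t)).
{ apply Rmult_lt_0_compat; [lra| apply Rinv_0_lt_compat; lra]. }
auto_derive.
- repeat split; try lra. rewrite Rabs_pos_eq; lra.
- rewrite sign_eq_1 by exact Hp. rewrite Rabs_pos_eq by lra. field. lra.
Qed.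
Lemma poly1 p u th : 3.1415 < p < 3.1416 -> 0 < u <= 1/3 -> 3/8 < th < 5/8 ->
  p * th * (1 - th) < 0.92 * ((2 - th) - p^2 * u^2 * (2 - th)^3 / 6).
Proof.
intros Hp Hu Ht.
assert (Hpu : 0 < p*u <= 3.1416/3) by (split; nra).
assert (Hw : p^2*u^2 <= 1.0967) by nra.
assert (Hc : 0 < (2-th)^3) by (apply pow_lt; lra).
assert (p^2*u^2*(2-th)^3 <= 1.0967*(2-th)^3) by (apply Rmult_le_compat_r; lra).
apply Rlt_le_trans with (0.92 * ((2 - th) - 1.0967 * (2 - th)^3 / 6)); [|lra].
assert (Ht1 : 0 < th*(1-th)) by nra.
apply Rle_lt_trans with (3.1416 * th * (1-th)).
{ rewrite !Rmult_assoc. apply Rmult_le_compat_r; lra. }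
pose proof (pow2_ge_0 (th-1/2)).
assert (0 <= (th-1/2)^2*(th-3/8)) by (apply Rmult_le_pos; lra).
assert (0 <= (th-1/2)^2*(5/8-th)) by (apply Rmult_le_pos; lra).
pose proof (pow2_ge_0 (th-0.455)).
nra.
Qed.
Lemma chain5 th u p w A B : 0 <= th -> 2/3 <= 1 - u -> 3.1415 <= p ->
  w <= 1.0967 -> 0 <= B <= A -> 1.0967 * A <= 6 -> w * B <= 1.0967 * B ->
  th * (2/3) * 3.1415 * (1 - 1.0967/6) * (1 - 1.0967*A/6) <=
  th * (1 - u) * p * (1 - w/6) * (1 - w*B/6).
Proof.
intros. assert (w*B <= 1.0967*B) by lra.
apply Rmult_le_compat; [apply Rmult_le_pos; [|lra]; apply Rmult_le_pos; [|lra]; apply Rmult_le_pos; lra | lra | | lra].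
apply Rmult_le_compat; [apply Rmult_le_pos; [|lra]; apply Rmult_le_pos; lra | lra | | lra].
apply Rmult_le_compat; [apply Rmult_le_pos; lra | lra | | lra].
apply Rmult_le_compat; lra.
Qed.

Lemma poly2a p u th : 3.1415 < p < 3.1416 -> 0 < u <= 1/3 -> 1/2 <= th < 5/8 ->
  (1 + p * th * (p * (th - 1/2) / 0.92)) * (1 - th) <=
  th * (1 - u) * p * (1 - p^2*u^2/6) * (1 - p^2*u^2*(1-th)^2/6).
Proof.
intros Hp Hu Ht.
assert (Hpu : 0 < p*u <= 3.1416/3) by (split; nra).
assert (Hw : p^2*u^2 <= 1.0967) by nra.
assert (H1 : 0 <= p^2*u^2) by nra.
pose proof (pow2_ge_0 (1-th)).
assert (H2: (1-th)^2 <= 1/4) by nra.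
eapply Rle_trans.
2: { replace (p^2*u^2*(1-th)^2) with ((p^2*u^2)*(1-th)^2) by ring.
  apply (chain5 th u p (p^2*u^2) (1/4) ((1-th)^2)); try lra.
  apply Rmult_le_compat_r; lra. }
assert (0 <= th - 1/2) by lra.
assert (p*(th-1/2) <= 3.1416*(th-1/2)) by nra.
assert (p*th <= 3.1416*th) by nra.
assert (p * th * (p * (th - 1/2) / 0.92) <= 3.1416*th*(3.1416*(th-1/2)/0.92)).
{ unfold Rdiv. apply Rmult_le_compat; try nra. }
assert ((1 + p * th * (p * (th - 1/2) / 0.92)) * (1 - th) <=
   (1 + 3.1416*th*(3.1416*(th-1/2)/0.92)) * (1 - th)) by (apply Rmult_le_compat_r; lra).
nra.
Qed.

Lemma poly2b p u th : 3.1415 < p < 3.1416 -> 0 < u <= 1/3 -> 3/8 < th <= 1/2 ->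
  (1 + p * th * (p * (th - 1/2) - (p * (th - 1/2))^3/6)) * (1 - th) <=
  th * (1 - u) * p * (1 - p^2*u^2/6) * (1 - p^2*u^2*(1-th)^2/6).
Proof.
intros Hp Hu Ht.
assert (Hpu : 0 < p*u <= 3.1416/3) by (split; nra).
assert (Hw : p^2*u^2 <= 1.0967) by nra.
assert (H1 : 0 <= p^2*u^2) by nra.
pose proof (pow2_ge_0 (1-th)).
assert (H2: (1-th)^2 <= 0.4) by nra.
eapply Rle_trans.
2: { replace (p^2*u^2*(1-th)^2) with ((p^2*u^2)*(1-th)^2) by ring.
  apply (chain5 th u p (p^2*u^2) 0.4 ((1-th)^2)); try lra.
  apply Rmult_le_compat_r; lra. }
set (ph := p * (th - 1/2)).
assert (Hph : -0.3928 <= ph <= 0) by (unfold ph; nra).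
pose proof (pow2_ge_0 ph).
assert (ph - ph^3/6 <= 0.974 * ph) by nra.
assert (p * th * (ph - ph ^ 3 / 6) <= p*th*(0.974*ph)) by (apply Rmult_le_compat_l; nra).
assert (ph <= 3.1415 * (th - 1/2)) by (unfold ph; nra).
assert (p*th*(0.974*ph) <= 3.1415*th*(0.974*ph)).
{ assert (0 <= (p - 3.1415)*th*(-(0.974*ph))) by (apply Rmult_le_pos; [apply Rmult_le_pos|]; lra). nra. }
assert (3.1415*th*(0.974*ph) <= 3.1415 * th * 0.974 * (3.1415 * (th - 1/2))) by nra.
nra.
Qed.

Lemma sin_le_id y : 0 <= y -> y <= PI -> sin y <= y.
Proof.
intros H1 H2. destruct (sin_bounds y H1 H2) as [_ B]. pose proof PI_4.
pose proof (pow2_ge_0 y).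
assert (y^2 <= 16) by nra.
assert (y^5/120 <= y^3/6) by (assert (0 <= y^3) by (apply pow_le; lra); nra).
assert (0 <= y^3) by (apply pow_le; lra). lra.
Qed.

Lemma PI_bounds : 3.1415 < PI < 3.1416.
Proof.
destruct (PI_2_3_7_ineq 2) as [H1 H2].
unfold PI_2_3_7_tg, tg_alt, Ratan_seq in *. simpl in *. lra.
Qed.

Theorem lemma5p8 (q : nat) (t s : R) :
  (3 <= q)%nat ->
  3 / (8 * INR q) < t < 5 / (8 * INR q) ->
  0 < s <= / INR q - t ->
  Hq q t s < 0.
Proof.
intros Hq3 Ht Hs.
assert (HQ : 3 <= INR q) by (replace 3 with (INR 3) by (simpl; ring); apply le_INR; exact Hq3).
set (Q := INR q) in *.
assert (HQ0 : 0 < Q) by lra.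
pose proof PI_bounds as Hpi.
pose (th := Q * t).
assert (Hth : 3/8 < th < 5/8).
{ unfold th. destruct Ht as [Ht1 Ht2]. split.
  - apply (Rmult_lt_compat_l Q) in Ht1; [|lra]. replace (Q * (3 / (8*Q))) with (3/8) in Ht1 by (field; lra). lra.
  - apply (Rmult_lt_compat_l Q) in Ht2; [|lra]. replace (Q * (5 / (8*Q))) with (5/8) in Ht2 by (field; lra). lra. }
assert (Et : t = th * / Q) by (unfold th; field; lra).
clearbody th. subst t. clear Ht.
set (u := / Q) in *.
assert (Hu : 0 < u <= 1/3).
{ unfold u. split. apply Rinv_0_lt_compat; lra.
  replace (1/3) with (/3) by field. apply Rinv_le_contravar; lra. }
assert (EQ : Q = / u) by (unfold u; rewrite Rinv_inv; reflexivity).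
assert (E1 : PI * Q * (th * u) = PI * th) by (rewrite EQ; field; lra).
destruct Hs as [Hs1 Hs2].
set (a := PI * u).
set (x := PI * (th * u)).
set (sg := PI * s).
set (dl := a - x - sg).
assert (Hx : 0 < x) by (unfold x; apply Rmult_lt_0_compat; nra).
assert (Hxa : x = a * th) by (unfold x, a; ring).
assert (Ha : 0 < a <= 3.1416/3) by (unfold a; split; nra).
assert (Hdl : 0 <= dl) by (unfold dl, a, x, sg; nra).
assert (Hsg : 0 < sg) by (unfold sg; nra).
assert (Hsgm : sg <= a - x) by (unfold dl in Hdl; lra).
assert (Hdlb : dl <= a - x) by (unfold dl; lra).
assert (Hxb : 3/8 * a < x < 5/8 * a) by (rewrite Hxa; split; nra).
assert (HS1 : 0 < sin sg) by (apply sin_gt_0; lra).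
assert (E2 : PI * (u + s) = a + sg) by (unfold a, sg; ring).
assert (HS2 : 0 < sin (a + sg)) by (apply sin_gt_0; lra).
assert (HSx : 0 < sin x) by (apply sin_gt_0; lra).
assert (HSQ : 0 < sin (PI * th)) by (apply sin_gt_0; nra).
assert (HSm : 0 < sin (a - x)) by (apply sin_gt_0; lra).
assert (HS2m : 0 < sin (2*a - x)) by (apply sin_gt_0; lra).
set (Der := PI * Q * cos (PI * th) / sin (PI * th) - PI * cos x / sin x).
assert (HD : Derive (fq q) (th * u) = Der).
{ apply is_derive_unique. unfold fq, Der. rewrite <- E1. apply der. rewrite E1; exact HSQ. exact HSx. }
set (c := (cos x / sin x - Q * cos (PI * th) / sin (PI * th)) / (Q - 1)).
assert (EH : Hq q (th * u) s = ln (sin sg) - ln (sin (a + sg)) + ln Q - ln (sin (PI * th)) + ln (sin x) + c * dl).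
{ unfold Hq, Aq, Bq, fq0. rewrite HD. unfold fq. fold Q. fold u. rewrite E1, E2.
  fold x. fold sg.
  rewrite Rabs_pos_eq by (apply Rlt_le; apply Rdiv_lt_0_compat; lra).
  rewrite !ln_div by lra.
  assert (N1 : sin (PI * (th * u)) <> 0) by (fold x; lra).
  assert (N2 : sin (PI * th) <> 0) by lra.
  unfold c, Der, dl, a, x, sg. field. repeat split; lra. }
rewrite EH.
set (ph := PI * (th - 1/2)).
assert (Hph : -0.3928 <= ph <= 0.3928) by (unfold ph; split; nra).
assert (Ec : cos (PI * th) = - sin ph).
{ replace (PI * th) with (ph + PI/2) by (unfold ph; field). rewrite cos_plus, cos_PI2, sin_PI2. ring. }
assert (Es : sin (PI * th) = cos ph).
{ replace (PI * th) with (ph + PI/2) by (unfold ph; field). rewrite sin_plus, cos_PI2, sin_PI2. ring. }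
assert (Hcph : 0.92 <= cos ph).
{ destruct (cos_bounds ph) as [C1 _]; try lra. pose proof (pow2_ge_0 ph). nra. }
assert (Hcph1 : cos ph <= 1) by (pose proof (COS_bound ph); lra).
assert (Hd : Q * sin (a - x) * sin x < sin (2*a - x) * sin (PI * th)).
{ assert (U1 : sin (a - x) <= a - x) by (apply sin_le_id; lra).
  assert (U2 : sin x <= x) by (apply sin_le_id; lra).
  assert (L1 : (2*a - x) - (2*a-x)^3/6 <= sin (2*a - x)) by (apply sin_bounds; lra).
  assert (Hy : 0 <= (2*a - x) - (2*a-x)^3/6).
  { assert (0 < 2*a - x <= 2.1) by lra. pose proof (pow2_ge_0 (2*a-x)). nra. }
  apply Rle_lt_trans with (Q * (a - x) * x).
  { rewrite Rmult_assoc, (Rmult_assoc Q). apply Rmult_le_compat_l; [lra|].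
    apply Rmult_le_compat; lra. }
  apply Rlt_le_trans with (((2*a - x) - (2*a-x)^3/6) * 0.92).
  2: { rewrite Es. apply Rmult_le_compat; lra. }
  assert (P1 := poly1 PI u th Hpi Hu Hth).
  replace (Q * (a - x) * x) with (PI * u * (PI * th * (1 - th))) by (rewrite EQ; unfold a, x; field; lra).
  replace (((2*a - x) - (2*a-x)^3/6) * 0.92) with (PI * u * (0.92 * ((2 - th) - PI^2 * u^2 * (2 - th)^3 / 6))) by (unfold a, x; field).
  apply Rmult_lt_compat_l; [nra|exact P1]. }
assert (Eb : sin sg * sin (2*a - x) - sin (a + sg) * sin (a - x) = - sin a * sin dl).
{ replace (2*a - x) with ((a + sg) + dl) by (unfold dl; ring).
  replace (a - x) with (sg + dl) by (unfold dl; ring).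
  replace (sin a) with (sin ((a + sg) - sg)) by (f_equal; ring).
  set (b := a + sg). rewrite (sin_plus b dl), (sin_plus sg dl), (sin_minus b sg). ring. }
assert (Hsa : a - a^3/6 <= sin a) by (apply sin_bounds; lra).
assert (Hcot : cos x / sin x <= 1 / x).
{ destruct (cos_bounds x) as [_ C2]; try lra.
  destruct (sin_bounds x) as [S3 _]; try lra.
  assert (x * cos x <= sin x).
  { assert (x <= 0.7) by lra. pose proof (pow2_ge_0 x).
    assert (x * cos x <= x * (1 - x^2/2 + x^4/24)) by (apply Rmult_le_compat_l; lra).
    assert (0 <= x^3) by (apply pow_le; lra). nra. }
  replace (cos x / sin x) with ((x * cos x) * / (x * sin x)) by (field; lra).
  replace (1 / x) with (sin x * / (x * sin x)) by (field; lra).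
  apply Rmult_le_compat_r; [apply Rlt_le, Rinv_0_lt_compat; nra | lra]. }
assert (Hkey : exists gb, - (cos (PI * th) / sin (PI * th)) <= gb /\ (1 + PI * th * gb) * (1 - th) <= th * (1 - u) * PI * (1 - PI^2*u^2/6) * (1 - PI^2*u^2*(1-th)^2/6)).
{ rewrite Ec, Es. destruct (Rle_lt_dec (1/2) th) as [Hh|Hh].
  - exists (PI * (th - 1/2) / 0.92). split; [|apply poly2a; lra].
    fold ph. assert (0 <= ph) by (unfold ph; nra).
    assert (sin ph <= ph) by (apply sin_le_id; lra).
    assert (0 <= sin ph) by (apply sin_ge_0; lra).
    replace (- (- sin ph / cos ph)) with (sin ph / cos ph) by (field; lra).
    unfold Rdiv. apply Rmult_le_compat; try lra.
    apply Rlt_le, Rinv_0_lt_compat; lra. apply Rinv_le_contravar; lra.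
  - exists (PI * (th - 1/2) - (PI * (th - 1/2))^3/6). split; [|apply poly2b; lra].
    fold ph. assert (ph < 0) by (unfold ph; nra).
    destruct (sin_bounds (- ph)) as [S4 _]; try lra.
    rewrite sin_neg in S4.
    assert (sin ph <= ph - ph^3/6) by (replace ((-ph)^3) with (- ph^3) in S4 by ring; lra).
    assert (sin ph <= 0) by (pose proof (pow2_ge_0 ph); nra).
    replace (- (- sin ph / cos ph)) with (sin ph / cos ph) by (field; lra).
    assert (sin ph / cos ph <= sin ph).
    { replace (sin ph / cos ph) with (sin ph * / cos ph) by reflexivity.
      assert (1 <= / cos ph). { rewrite <- Rinv_1. apply Rinv_le_contravar; lra. }
      nra. }
    lra. }
destruct Hkey as [gb [Hgb Hpoly]].
set (Z := a * (1 - a^2/6) * (1 - (a - x)^2/6)).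
assert (Hcz : c * (a - x) <= Z).
{ assert (HQ1 : 0 < Q - 1) by lra.
  assert (Hc1 : c * (Q - 1) <= 1 / x + Q * gb).
  { unfold c. replace ((cos x / sin x - Q * cos (PI * th) / sin (PI * th)) / (Q - 1) * (Q - 1))
      with (cos x / sin x + Q * (- (cos (PI * th) / sin (PI * th)))) by (field; lra).
    apply Rplus_le_compat; [lra|]. apply Rmult_le_compat_l; lra. }
  apply Rle_trans with ((1 / x + Q * gb) * (a - x) / (Q - 1)).
  { replace (c * (a - x)) with (c * (Q - 1) * (a - x) / (Q - 1)) by (field; lra).
    unfold Rdiv. apply Rmult_le_compat_r; [apply Rlt_le, Rinv_0_lt_compat; lra|].
    apply Rmult_le_compat_r; lra. }
  assert (Hu1 : 0 < u * / (th * (1 - u))).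
  { apply Rmult_lt_0_compat; [lra|]. apply Rinv_0_lt_compat. nra. }
  replace ((1 / x + Q * gb) * (a - x) / (Q - 1)) with ((1 + PI * th * gb) * (1 - th) * (u * / (th * (1 - u)))).
  2: { rewrite EQ. unfold x, a. field. repeat split; nra. }
  replace Z with (th * (1 - u) * PI * (1 - PI^2*u^2/6) * (1 - PI^2*u^2*(1-th)^2/6) * (u * / (th * (1 - u)))).
  2: { unfold Z, a, x. field. repeat split; nra. }
  apply Rmult_le_compat_r; lra. }
assert (Hsdl : 0 <= sin dl) by (apply sin_ge_0; lra).
assert (Hsa0 : 0 < sin a) by (apply sin_gt_0; lra).
assert (Hc : c * dl * (sin (a + sg) * sin (a - x)) <= sin a * sin dl).
{ destruct (Rle_lt_dec c 0) as [Hc0|Hc0].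
  - assert (0 <= dl * (sin (a + sg) * sin (a - x))) by (apply Rmult_le_pos; [lra|apply Rmult_le_pos; lra]).
    assert (0 <= (- c) * (dl * (sin (a + sg) * sin (a - x)))) by (apply Rmult_le_pos; lra).
    assert (0 <= sin a * sin dl) by (apply Rmult_le_pos; lra).
    lra.
  - assert (U1 : sin (a - x) <= a - x) by (apply sin_le_id; lra).
    assert (U2 : sin (a + sg) <= 1) by (pose proof (SIN_bound (a + sg)); lra).
    assert (Hprod : sin (a + sg) * sin (a - x) <= a - x).
    { apply Rle_trans with (1 * (a - x)); [apply Rmult_le_compat; lra | lra]. }
    assert (L1 : c * dl * (sin (a + sg) * sin (a - x)) <= c * dl * (a - x)).
    { apply Rmult_le_compat_l; [apply Rmult_le_pos; lra | lra]. }
    destruct (sin_bounds dl) as [SD _]; try lra.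
    assert (L2 : dl * (1 - (a - x)^2/6) <= sin dl).
    { assert (dl^3 <= dl * (a - x)^2).
      { replace (dl^3) with (dl * dl^2) by ring. apply Rmult_le_compat_l; [lra|].
        apply pow_incr; lra. }
      lra. }
    assert (L3 : 0 <= 1 - (a - x)^2/6).
    { assert (a - x <= 1.1) by lra. pose proof (pow2_ge_0 (a-x)). nra. }
    assert (L4 : 0 <= a - a^3/6).
    { assert (a <= 1.1) by lra. pose proof (pow2_ge_0 a). nra. }
    apply Rle_trans with (c * dl * (a - x)); [exact L1|].
    replace (c * dl * (a - x)) with (dl * (c * (a - x))) by ring.
    apply Rle_trans with (dl * Z); [apply Rmult_le_compat_l; lra|].
    unfold Z. replace (dl * (a * (1 - a ^ 2 / 6) * (1 - (a - x) ^ 2 / 6)))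
      with ((a * (1 - a ^ 2 / 6)) * (dl * (1 - (a - x) ^ 2 / 6))) by ring.
    assert (Ea : a * (1 - a^2/6) = a - a^3/6) by field.
    rewrite Ea. apply Rmult_le_compat; [lra | apply Rmult_le_pos; lra | lra | lra]. }
set (r := sin sg * sin (2*a - x) / (sin (a + sg) * sin (a - x))).
assert (Hr0 : 0 < r) by (unfold r; apply Rdiv_lt_0_compat; apply Rmult_lt_0_compat; lra).
assert (Hlnr : ln r <= r - 1).
{ pose proof (exp_ineq1_le (ln r)). rewrite exp_ln in H by exact Hr0. lra. }
assert (Er : ln r = ln (sin sg) + ln (sin (2*a - x)) - ln (sin (a + sg)) - ln (sin (a - x))).
{ unfold r. rewrite ln_div, !ln_mult; try lra; apply Rmult_lt_0_compat; lra. }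
assert (Hr1 : r - 1 <= - (c * dl)).
{ assert (Er1 : r - 1 = - (sin a * sin dl) / (sin (a + sg) * sin (a - x))).
  { unfold r. replace (- (sin a * sin dl)) with (- sin a * sin dl) by ring. rewrite <- Eb.
    field. split; lra. }
  rewrite Er1.
  assert (Hpos : 0 < sin (a + sg) * sin (a - x)) by (apply Rmult_lt_0_compat; lra).
  apply (Rmult_le_reg_r (sin (a + sg) * sin (a - x))); [exact Hpos|].
  replace (- (sin a * sin dl) / (sin (a + sg) * sin (a - x)) * (sin (a + sg) * sin (a - x)))
    with (- (sin a * sin dl)) by (field; lra).
  lra. }
assert (Hlnd : ln (Q * sin (a - x) * sin x) < ln (sin (2*a - x) * sin (PI * th))).
{ apply ln_increasing; [apply Rmult_lt_0_compat; [apply Rmult_lt_0_compat|]; lra | exact Hd]. }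
rewrite !ln_mult in Hlnd; try lra; try (apply Rmult_lt_0_compat; lra).
Qed.
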